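(* Let $X$ be a finite discrete space with at least two elements, $\Gamma$ a nonempty countable set, $\varphi:\Gamma\to\Gamma$ any map. Then $(X^\Gamma,\sigma_\varphi)$ is transitive distributional chaotic if and only if $\varphi$ is one-to-one and has no periodic point.
   Context: $X^\Gamma$ has the product topology and a fixed compatible metric $d$; $\sigma_\varphi((x_\alpha)_{\alpha\in\Gamma})=(x_{\varphi(\alpha)})_{\alpha\in\Gamma}$. For $f=\sigma_\varphi$, $x,y\in X^\Gamma$, $t>0$: $\xi(x,y,t,n)=\#\{i\in\{0,\dots,n-1\}:d(f^i(x),f^i(y))<t\}$, $F_{xy}(t)=\liminf_n \xi(x,y,t,n)/n$, $F^*_{xy}(t)=\limsup_n\xi(x,y,t,n)/n$. A point $x$ is a transitive point if $\{f^n(x):n\ge0\}$ is dense. The system is transitive distributional chaotic if there exist a dense uncountable set $A\subseteq X^\Gamma$ consisting of transitive points and $\varepsilon>0$ such that for all distinct $x,y\in A$: $F^*_{xy}(s)=1$ for every $s>0$ and $F_{xy}(\varepsilon)=0$. *)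

(* Defs.v *)
From mathcomp Require Import all_boot all_order all_algebra.
From mathcomp Require Import all_classical all_reals all_analysis.
Set Implicit Arguments. Unset Strict Implicit. Unset Printing Implicit Defensive.
Import Order.TTheory GRing.Theory Num.Theory.
Local Open Scope classical_set_scope.
Local Open Scope ring_scope.

Section Defs.
Variables (R : realType) (X : finType) (G : countType).

Definition sigma_phi (phi : G -> G) (x : G -> X) : G -> X := fun a => x (phi a).

Definition prod_open (U : set (G -> X)) : Prop :=
  forall x, U x -> exists F : seq G,
    forall y, (forall a, a \in F -> y a = x a) -> U y.

Definition metric_open (d : (G -> X) -> (G -> X) -> R) (U : set (G -> X)) : Prop :=
  forall x, U x -> exists2 e : R, 0 < e & forall y, d x y < e -> U y.

Definition compatible_metric (d : (G -> X) -> (G -> X) -> R) : Prop :=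
  [/\ forall x y, 0 <= d x y,
      forall x y, d x y = 0 <-> x = y,
      forall x y, d x y = d y x,
      forall x y z, d x z <= d x y + d y z &
      forall U, prod_open U <-> metric_open d U].

Definition prod_dense (A : set (G -> X)) : Prop :=
  forall U, prod_open U -> (exists x, U x) -> exists a, A a /\ U a.

Definition transitive_point (f : (G -> X) -> (G -> X)) (x : G -> X) : Prop :=
  prod_dense [set ssrnat.iter n f x | n in [set: nat]].

Definition xi (d : (G -> X) -> (G -> X) -> R) (f : (G -> X) -> (G -> X))
  (x y : G -> X) (t : R) (n : nat) : nat :=
  #|[set i : 'I_n | d (ssrnat.iter i f x) (ssrnat.iter i f y) < t]|.

Definition Flow d f x y t : \bar R :=
  limn_einf (fun n => ((xi d f x y t n)%:R / n%:R)%:E).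
Definition Fup d f x y t : \bar R :=
  limn_esup (fun n => ((xi d f x y t n)%:R / n%:R)%:E).

Definition transitive_distributional_chaotic
  (d : (G -> X) -> (G -> X) -> R) (f : (G -> X) -> (G -> X)) : Prop :=
  exists (A : set (G -> X)) (eps : R),
    [/\ prod_dense A, ~ countable A, (forall x, A x -> transitive_point f x),
        0 < eps &
        forall x y, A x -> A y -> x <> y ->
          (forall s, 0 < s -> Fup d f x y s = 1%E) /\ Flow d f x y eps = 0%E].

End Defs.

(* Main.v *)
Require Import Defs.
From mathcomp Require Import all_boot all_order all_algebra.
From mathcomp Require Import all_classical all_reals all_analysis.
From mathcomp Require Import lra zify.
Import Order.TTheory GRing.Theory Num.Theory.
Set Implicit Arguments. Unset Strict Implicit.
Local Open Scope classical_set_scope.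
Local Open Scope ring_scope.

Lemma iter_inj_f (T : Type) (f : T -> T) n : injective f -> injective (iter n f).
Proof. by move=> fi; elim: n => [//|n IH] x y /=; move/fi/IH. Qed.

Lemma iter_sigma (X : finType) (G : countType) (phi : G -> G) n (x : G -> X) a :
  iter n (@sigma_phi X G phi) x a = x (iter n phi a).
Proof.
elim: n a => [//|n IH] a; by rewrite iterS /sigma_phi IH -iterSr.
Qed.

Lemma iter_period (T : Type) (f : T -> T) n a q :
  iter n f a = a -> iter (q * n) f a = a.
Proof.
move=> h; elim: q => [//|q IH]; by rewrite mulSn iterD IH h.
Qed.

Section Forward.
Variables (X : finType) (G : countType) (phi : G -> G).

Lemma not_inj_no_trans (a b : G) (c c' : X) x : c != c' ->
  phi a = phi b -> a <> b -> ~ transitive_point (@sigma_phi X G phi) x.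
Proof.
move=> cc' pab ab tr.
have key : forall n, (0 < n)%N -> x (iter n phi a) = x (iter n phi b).
  by case=> [//|n] _; rewrite !iterSr pab.
have ba : b != a by apply/eqP => h; apply: ab.
have [xab|xab] := eqVneq (x a) (x b).
- have o : prod_open [set y : G -> X | y a != y b].
    rewrite /prod_open => y /= yab; exists [:: a; b] => z hz.
    by rewrite !hz ?inE ?eqxx ?orbT.
  have ne : exists y, [set y : G -> X | y a != y b] y.
    exists (fun g => if g == a then c else c') => /=.
    by rewrite eqxx (negbTE ba).
  have [z [[n _ <-]]] := tr _ o ne; rewrite /= !iter_sigma.
  case: n => [|n]; first by rewrite /= xab eqxx.
  by rewrite key // eqxx.
- have o : prod_open [set y : G -> X | y a = x b /\ y b = x a].
    rewrite /prod_open => y /= [h1 h2]; exists [:: a; b] => z hz.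
    by rewrite !hz ?inE ?eqxx ?orbT.
  have ne : exists y, [set y : G -> X | y a = x b /\ y b = x a] y.
    exists (fun g => if g == a then x b else x a) => /=.
    by rewrite eqxx (negbTE ba).
  have [z [[n _ <-]]] := tr _ o ne; rewrite /= !iter_sigma.
  case: n => [|n]; first by move=> [h _]; move: xab; rewrite h eqxx.
  by rewrite key // => -[-> h]; move: xab; rewrite h eqxx.
Qed.

Lemma periodic_no_trans (a : G) n (c c' : X) x : c != c' -> (0 < n)%N ->
  iter n phi a = a -> ~ transitive_point (@sigma_phi X G phi) x.
Proof.
move=> cc' n0 per tr.
have hit : forall v : X, exists m, forall j, (m <= j)%N -> x (iter j phi a) = v.
  move=> v.
  have o : prod_open [set y : G -> X | forall k, (k < n)%N -> y (iter k phi a) = v].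
    rewrite /prod_open => y /= yv; exists [seq iter k phi a | k <- iota 0 n] => z hz k kn.
    rewrite hz ?yv //; apply/mapP; exists k => //; by rewrite mem_iota.
  have ne : exists y, [set y : G -> X | forall k, (k < n)%N -> y (iter k phi a) = v] y.
    by exists (fun _ => v).
  have [z [[m _ <-]] /= h] := tr _ o ne; exists m => j mj.
  have -> : j = (m + (j - m) %% n + ((j - m) %/ n) * n)%N.
    by rewrite -addnA [X in (_ + X)%N]addnC -divn_eq subnKC.
  rewrite iterD iter_period // iterD.
  have := h ((j - m) %% n)%N; rewrite iter_sigma -iterD => -> //.
  by rewrite ltn_mod.
have [m1 h1] := hit c; have [m2 h2] := hit c'.
have := h1 (m1 + m2)%N (leq_addr _ _); rewrite h2 ?leq_addl // => e.
by move: cc'; rewrite e eqxx.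
Qed.

End Forward.

Section Counting.
Variables (R : realType) (X : finType) (G : countType).
Variables (d : (G -> X) -> (G -> X) -> R) (f : (G -> X) -> (G -> X)) (x y : G -> X) (t : R).

Let P (i : nat) : bool := d (iter i f x) (iter i f y) < t.

Lemma xi_sum n : xi d f x y t n = (\sum_(0 <= i < n) P i)%N.
Proof.
rewrite /xi -sum1_card big_mkord big_mkcond /=.
by apply: eq_bigr => i _; rewrite unfold_in /in_set /= asboolb /P; case: (_ < _).
Qed.

Lemma xi_le n : (xi d f x y t n <= n)%N.
Proof. by rewrite /xi; apply: leq_trans (max_card _) _; rewrite card_ord. Qed.

Lemma xi_lb N M : (N <= M)%N -> (forall i, (N <= i < M)%N -> P i) ->
  (M - N <= xi d f x y t M)%N.
Proof.
move=> NM h; rewrite xi_sum (big_cat_nat (leq0n N) NM) /=.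
apply: leq_trans (leq_addl _ _).
rewrite (eq_big_nat _ _ (F2 := fun=> 1%N)); last by move=> i hi; rewrite (h i hi).
by rewrite sum_nat_const_nat muln1.
Qed.

Lemma xi_ub N M : (N <= M)%N -> (forall i, (N <= i < M)%N -> ~~ P i) ->
  (xi d f x y t M <= N)%N.
Proof.
move=> NM h; rewrite xi_sum (big_cat_nat (leq0n N) NM) /=.
rewrite (eq_big_nat _ _ (m := N) (n := M) (F1 := fun i => nat_of_bool (P i)) (F2 := fun=> 0%N)); last first.
  by move=> i hi; rewrite (negbTE (h i hi)).
rewrite sum_nat_const_nat muln0 addn0.
apply: (@leq_trans (\sum_(0 <= i < N) 1)%N).
  by apply: leq_sum => i _; exact: leq_b1.
by rewrite sum_nat_const_nat muln1 subn0.
Qed.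

End Counting.

Section Limits.
Variable R : realType.

Lemma esup_one (a : nat -> nat) :
  (forall n, (a n <= n)%N) ->
  (forall e : R, 0 < e -> forall B, exists m, (B <= m)%N /\ 1 - e <= (a m)%:R / m%:R) ->
  limn_esup (fun n => ((a n)%:R / n%:R : R)%:E) = 1%E.
Proof.
move=> ub lb; rewrite limn_esup_lim.
have -> : esups (fun n => ((a n)%:R / n%:R : R)%:E) = fun _ => 1%E.
  apply: funext => n; apply/eqP; rewrite eq_le; apply/andP; split.
  - apply: ge_ereal_sup => _ [m _ <-]; rewrite lee_fin.
    case: m => [|m]; first by rewrite invr0 mulr0.
    by rewrite ler_pdivrMr ?ltr0n // mul1r ler_nat.
  - apply/lee_addgt0Pr => e e0; have [m [nm hm]] := lb e e0 n.
    apply: (@le_trans _ _ (((a m)%:R / m%:R)%:E + e%:E)%E).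
      by rewrite -EFinD lee_fin -lerBlDr.
    rewrite leeD2r //; apply: ereal_sup_ubound; by exists m.
apply: lim_cst; exact: ereal_hausdorff.
Qed.

Lemma einf_zero (a : nat -> nat) :
  (forall e : R, 0 < e -> forall B, exists m, (B <= m)%N /\ (a m)%:R / m%:R <= e) ->
  limn_einf (fun n => ((a n)%:R / n%:R : R)%:E) = 0%E.
Proof.
move=> lb; rewrite limn_einf_lim.
have -> : einfs (fun n => ((a n)%:R / n%:R : R)%:E) = fun _ => 0%E.
  apply: funext => n; apply/eqP; rewrite eq_le; apply/andP; split.
  - apply/lee_addgt0Pr => e e0; have [m [nm hm]] := lb e e0 n.
    rewrite add0e; apply: le_trans (ereal_inf_lbound _) _.
      by exists m.
    by rewrite lee_fin.
  - apply: le_ereal_inf_tmp => _ [m _ <-]; rewrite lee_fin.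
    by rewrite divr_ge0.
apply: lim_cst; exact: ereal_hausdorff.
Qed.

Lemma ratio_lb (a N M K : nat) (e : R) : 0 < e -> (K * N < M)%N ->
  1 <= e * K%:R -> (M - N <= a)%N -> (N <= M)%N -> 1 - e <= a%:R / M%:R.
Proof.
move=> e0 KNM eK MNa NM.
have M0 : (0 < M)%N by apply: leq_ltn_trans KNM.
rewrite ler_pdivlMr ?ltr0n //.
have h1 : (M%:R - N%:R : R) <= a%:R by rewrite -natrB // ler_nat.
have h2 : (K%:R * N%:R : R) <= M%:R by rewrite -natrM ler_nat ltnW.
have h3 : (0 : R) <= N%:R by [].
nra.
Qed.

Lemma ratio_ub (a N M K : nat) (e : R) : 0 < e -> (K * N < M)%N ->
  1 <= e * K%:R -> (a <= N)%N -> a%:R / M%:R <= e.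
Proof.
move=> e0 KNM eK aN.
have M0 : (0 < M)%N by apply: leq_ltn_trans KNM.
rewrite ler_pdivrMr ?ltr0n //.
have h1 : (a%:R : R) <= N%:R by rewrite ler_nat.
have h2 : (K%:R * N%:R : R) <= M%:R by rewrite -natrM ler_nat ltnW.
have h3 : (0 : R) <= N%:R by [].
nra.
Qed.

Lemma big_k (e : R) : 0 < e -> exists K0 : nat, forall k, (K0 <= k)%N -> 1 <= e * k.+1%:R.
Proof.
move=> e0; exists (Num.Def.archi_bound e^-1) => k hk.
have ei : 0 <= e^-1 by rewrite invr_ge0 ltW.
have h1 := @archi_boundP _ e^-1 ei.
have h2 : ((Num.Def.archi_bound e^-1)%:R : R) <= k.+1%:R by rewrite ler_nat (leq_trans hk).
have h3 : e * e^-1 = 1 by rewrite mulfV // gt_eqF.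
nra.
Qed.

End Limits.

Definition Gseq (G : countType) (k : nat) : seq G := pmap (@pickle_inv G) (iota 0 k).

Lemma mem_Gseq (G : countType) (g : G) k : (g \in Gseq G k) = (pickle g < k)%N.
Proof.
rewrite /Gseq mem_pmap; apply/mapP/idP => [[n]|h].
  rewrite mem_iota add0n => /andP[_ nk] e.
  by have := @pickle_invK G n; rewrite -e /= => ->.
by exists (pickle g); rewrite ?pickleK_inv // mem_iota add0n h.
Qed.

Lemma cyl_Gseq (G : countType) (F : seq G) : exists m, forall a, a \in F -> a \in Gseq G m.
Proof.
elim: F => [|a F [m hm]]; first by exists 0%N.
exists (maxn (pickle a).+1 m) => b; rewrite inE => /orP[/eqP->|/hm].
  by rewrite mem_Gseq leq_max ltnSn.
by rewrite !mem_Gseq => h; rewrite leq_max h orbT.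
Qed.

Section Lexists.
Variables (G : countType) (phi : G -> G).
Hypothesis noper : forall a n, (0 < n)%N -> iter n phi a <> a.

Lemma L_pair (b b' : G) : exists L, forall j, (L <= j)%N -> iter j phi b != b'.
Proof.
have [[j0 h0]|nh] := pselect (exists j0, iter j0 phi b = b'); last first.
  by exists 0%N => j _; apply/eqP => h; apply: nh; exists j.
exists j0.+1 => j hj; apply/eqP => h.
have := @noper b' (j - j0)%N; rewrite subn_gt0 => /(_ hj); apply.
by rewrite -{1}h0 -iterD subnK // ltnW.
Qed.

Lemma L_seq1 (b : G) (T : seq G) :
  exists L, forall j b', (L <= j)%N -> b' \in T -> iter j phi b != b'.
Proof.
elim: T => [|a T [L hL]]; first by exists 0%N.
have [L' hL'] := L_pair b a.
exists (maxn L L') => j b' hj; rewrite inE => /orP[/eqP->|].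
  by apply: hL'; apply: leq_trans hj; rewrite leq_maxr.
by apply: hL; apply: leq_trans hj; rewrite leq_maxl.
Qed.

Lemma L_seq (S T : seq G) :
  exists L, forall j b b', (L <= j)%N -> b \in S -> b' \in T -> iter j phi b != b'.
Proof.
elim: S => [|a S [L hL]]; first by exists 0%N.
have [L' hL'] := L_seq1 a T.
exists (maxn L L') => j b b' hj; rewrite inE => /orP[/eqP->|].
  by apply: hL'; apply: leq_trans hj; rewrite leq_maxr.
by apply: hL; apply: leq_trans hj; rewrite leq_maxl.
Qed.

Lemma Lf_exists : {Lf : nat -> nat & forall k j b b', (Lf k <= j)%N ->
   b \in Gseq G k -> b' \in Gseq G k -> iter j phi b != b'}.
Proof.
apply: (@boolp.choice nat nat (fun k L => forall j b b', (L <= j)%N ->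
   b \in Gseq G k -> b' \in Gseq G k -> iter j phi b != b')) => k.
have [L hL] := L_seq (Gseq G k) (Gseq G k).
by exists L.
Qed.

End Lexists.

Lemma task_exists_gen (r t B : nat) : (r < 3)%N ->
  exists k, [/\ (k %% 3)%N = r, logn 2 (k %/ 3)%N.+1 = t & (B <= k)%N].
Proof.
move=> r3.
pose q := (2 ^ t * (B.*2).+1).-1.
have qS : q.+1 = (2 ^ t * (B.*2).+1)%N by rewrite /q prednK // muln_gt0 expn_gt0.
exists (q * 3 + r)%N; split.
- by rewrite modnMDl modn_small.
- rewrite divnMDl // divn_small // addn0 qS lognM ?expn_gt0 //.
  by rewrite pfactorK // logn_coprime ?addn0 // coprime2n /= odd_double.
- have : (B <= q)%N.
    rewrite -ltnS qS; apply: (@leq_trans (B.*2).+1); first by rewrite ltnS -addnn leq_addr.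
    by rewrite leq_pmull // expn_gt0.
  move=> h; apply: leq_trans h _; apply: leq_trans (leq_addr _ _).
  by rewrite leq_pmulr.
Qed.

Section Construction.
Local Open Scope nat_scope.
Variables (X : finType) (G : countType) (phi : G -> G).
Hypothesis phi_inj : injective phi.
Variables (c c' : X) (g0 : G).
Hypothesis cc' : c != c'.
Variable Lf : nat -> nat.
Hypothesis LfP : forall k j b b', Lf k <= j ->
   b \in Gseq G k -> b' \in Gseq G k -> iter j phi b != b'.

Fixpoint Nt k := match k with 0 => Lf 0 | k'.+1 => (k'.+1 * Nt k').+1 + Lf k'.+1 + k'.+1 end.
Definition Mt k := (k.+1 * Nt k).+1.

Lemma Nt_L k : Lf k <= Nt k.
Proof. by case: k => [//|k] /=; rewrite -addnA addnCA leq_addr. Qed.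

Lemma Nt_k k : k <= Nt k.
Proof. by case: k => [//|k] /=; rewrite leq_addl. Qed.

Lemma Nt_Mt k : Nt k < Mt k.
Proof. by rewrite /Mt ltnS leq_pmull. Qed.

Lemma Mt_k k : k < Mt k.
Proof. exact: leq_ltn_trans (Nt_k k) (Nt_Mt k). Qed.

Lemma Mt_Nt k k' : k < k' -> Mt k + Lf k' <= Nt k'.
Proof.
elim: k' => [//|k' IH]; rewrite ltnS leq_eqVlt => /orP[/eqP->|h] /=.
  by rewrite /Mt leq_addr.
apply: leq_trans (leq_addr _ _); rewrite leq_add2r.
apply: leq_trans (ltnW (Nt_Mt k')); apply: leq_trans (IH h).
by rewrite leq_addr.
Qed.

Definition lbl k := logn 2 (k %/ 3).+1.
Definition code k : option (nat * seq X) := unpickle (lbl k).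
Definition Fk k : seq G :=
  if k %% 3 == 2 then
    (match code k with Some (m', s') => if m' <= k then Gseq G m' else [::]
                      | None => [::] end)
  else Gseq G k.

Definition Idx := ((nat * seq X) * (nat -> bool))%type.
Definition omega (i : Idx) j : bool :=
  let p := pickle i.1 in
  if j < p then true else if j == p then false else i.2 (j - p.+1).
Definition th (i : Idx) := i.1.1.
Definition val (i : Idx) k (b : G) : X :=
  if k %% 3 == 0 then c else if k %% 3 == 1 then (if omega i (lbl k) then c' else c)
  else (match code k with Some (m', s') => nth c s' (index b (Gseq G m')) | None => c end).

Definition Claim (i : Idx) (g : G) (v : X) : Prop :=
  (exists k t b, [/\ th i <= k, Nt k <= t < Mt k, (k %% 3 == 2) ==> (t == Nt k),
                   b \in Fk k & iter t phi b = g /\ v = val i k b])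
  \/ (g \in Gseq G (th i) /\ v = nth c i.1.2 (index g (Gseq G (th i)))).

Definition xf (i : Idx) : G -> X := fun g => xget c (Claim i g).

Lemma Fk_sub k b : b \in Fk k -> b \in Gseq G k.
Proof.
rewrite /Fk; case: ifP => // _; case: (code k) => [[m' s']|] //.
case: ifP => // mk; rewrite !mem_Gseq => h; exact: leq_trans h mk.
Qed.

Lemma cross k k' t t' b b' : k < k' -> t < Mt k -> Nt k' <= t' ->
  b \in Gseq G k -> b' \in Gseq G k' -> iter t phi b = iter t' phi b' -> False.
Proof.
move=> kk' tM Nt' bk bk' e.
have h := Mt_Nt kk'.
have tt' : t + Lf k' < t'.
  apply: leq_trans Nt'; apply: leq_trans h; by rewrite ltn_add2r.
have e2 : b = iter (t' - t) phi b'.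
  apply: (@iter_inj_f _ phi t phi_inj); rewrite e -iterD subnKC //.
  by apply: leq_trans (ltnW tt'); rewrite leq_addr.
have l1 : Lf k' <= t' - t.
  by rewrite leq_subRL ?(leq_trans _ (ltnW tt')) ?leq_addr // addnC ltnW.
have l2 : b \in Gseq G k'.
  by move: bk; rewrite !mem_Gseq => bk; apply: leq_trans bk (ltnW kk').
by have := @LfP k' (t' - t) b' b l1 bk' l2; rewrite -e2 eqxx.
Qed.

Lemma init_task m k t b' g : m <= k -> Lf k <= t -> g \in Gseq G m ->
  b' \in Gseq G k -> iter t phi b' = g -> False.
Proof.
move=> mk Lt gm bk e.
have l2 : g \in Gseq G k.
  by move: gm; rewrite !mem_Gseq => h; apply: leq_trans h mk.
by have := @LfP k t b' g Lt bk l2; rewrite e eqxx.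
Qed.

Lemma val_indep i k b b' : k %% 3 != 2 -> val i k b = val i k b'.
Proof.
rewrite /val; have := ltn_pmod k (isT : 0 < 3).
by case: (k %% 3) => [|[|[|]]].
Qed.

Lemma task_task i k t b k' t' b' :
  Nt k <= t < Mt k -> (k %% 3 == 2) ==> (t == Nt k) -> b \in Fk k ->
  Nt k' <= t' < Mt k' -> (k' %% 3 == 2) ==> (t' == Nt k') -> b' \in Fk k' ->
  iter t phi b = iter t' phi b' -> val i k b = val i k' b'.
Proof.
move=> /andP[h1 h2] h3 h4 /andP[h1' h2'] h3' h4' e.
have [kk'|k'k|ekk] := ltngtP k k'; last subst k'.
- by case: (cross kk' h2 h1' (Fk_sub h4) (Fk_sub h4') e).
- by case: (cross k'k h2' h1 (Fk_sub h4') (Fk_sub h4) (esym e)).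
case: (boolP (k %% 3 == 2)) => k2; last exact: val_indep.
move: h3 h3'; rewrite k2 /= => /eqP tN /eqP t'N.
by move: e; rewrite tN t'N => /(@iter_inj_f _ phi _ phi_inj) ->.
Qed.

Lemma claim_uniq i g v v' : Claim i g v -> Claim i g v' -> v = v'.
Proof.
case=> [[k [t [b [h1 h2 h3 h4 [e ->]]]]]|[gm ->]];
  case=> [[k' [t' [b' [h1' h2' h3' h4' [e' ->]]]]]|[gm' ->]] //.
- by apply: task_task h2 h3 h4 h2' h3' h4' _; rewrite e e'.
- case: (init_task h1 _ gm' (Fk_sub h4) e).
  by move: h2 => /andP[h _]; exact: leq_trans (Nt_L k) h.
- case: (init_task h1' _ gm (Fk_sub h4') e').
  by move: h2' => /andP[h _]; exact: leq_trans (Nt_L k') h.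
Qed.

Lemma xf_claim i g v : Claim i g v -> xf i g = v.
Proof.
move=> h; rewrite /xf; apply: xget_unique => // v' h'.
exact: claim_uniq h' h.
Qed.

Lemma xf_task i k t b : th i <= k -> Nt k <= t < Mt k ->
  (k %% 3 == 2) ==> (t == Nt k) -> b \in Fk k -> xf i (iter t phi b) = val i k b.
Proof. by move=> *; apply: xf_claim; left; exists k, t, b. Qed.

Lemma xf_init i g : g \in Gseq G (th i) ->
  xf i g = nth c i.1.2 (index g (Gseq G (th i))).
Proof. by move=> *; apply: xf_claim; right. Qed.

Lemma xf_trans i : transitive_point (@sigma_phi X G phi) (xf i).
Proof.
move=> U oU [y0 Uy0].
have [F hF] := oU y0 Uy0.
have [m' hm] := cyl_Gseq F.
pose s' := [seq y0 a | a <- Gseq G m'].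
have [k [k3 lk kB]] := @task_exists_gen 2 (pickle (m', s')) (m' + th i) isT.
have cd : code k = Some (m', s') by rewrite /code /lbl lk pickleK.
have mk : m' <= k by apply: leq_trans kB; rewrite leq_addr.
exists (iter (Nt k) (@sigma_phi X G phi) (xf i)); split; first by exists (Nt k).
apply: hF => a aF.
have aG := hm a aF.
rewrite iter_sigma (@xf_task i k (Nt k) a).
- by rewrite /val k3 /= cd (nth_map a) ?index_mem // nth_index.
- by apply: leq_trans kB; rewrite leq_addl.
- by rewrite leqnn Nt_Mt.
- by rewrite eqxx implybT.
- by rewrite /Fk k3 eqxx cd mk.
Qed.

Lemma xf_dense : prod_dense (range xf).
Proof.
move=> U oU [y0 Uy0].
have [F hF] := oU y0 Uy0.
have [m hm] := cyl_Gseq F.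
pose i : Idx := ((m, [seq y0 a | a <- Gseq G m]), fun=> false).
exists (xf i); split; first by exists i.
apply: hF => a aF; have aG := hm a aF.
by rewrite xf_init //= (nth_map a) ?index_mem // nth_index.
Qed.

Lemma omega_inj i i' : (forall j, omega i j = omega i' j) -> i = i'.
Proof.
move: i i' => [[m s] b] [[m' s'] b'] h.
have pp : pickle (m, s) = pickle (m', s').
  case: (ltngtP (pickle (m, s)) (pickle (m', s'))) => [lt|gt|//].
    by move: (h (pickle (m, s))); rewrite /omega /= ltnn eqxx lt.
  by move: (h (pickle (m', s'))); rewrite /omega /= ltnn eqxx gt.
have e1 : (m, s) = (m', s') by apply: (pcan_inj pickleK).
case: e1 => em es; subst m' s'.
have -> : b = b'; last by [].
apply: funext => j; have := h (j + (pickle (m, s)).+1).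
set P := pickle (m, s).
have a1 : (j + P.+1 < P) = false.
  by apply/negbTE; rewrite -leqNgt; apply: leq_trans (leq_addl j _); exact: leqnSn.
have a2 : (j + P.+1 == P) = false.
  by apply/negbTE; rewrite neq_ltn (ltn_addl j (ltnSn P)) orbT.
by rewrite /omega /= -/P a1 a2 addnK.
Qed.

Lemma bits_differ i i' B : i <> i' ->
  exists k, [/\ k %% 3 = 1, B <= k & omega i (lbl k) != omega i' (lbl k)].
Proof.
move=> ne; have [j hj] : exists j, omega i j != omega i' j.
  apply: contrapT => nh; apply: ne; apply: omega_inj => j.
  by apply/eqP/negPn/negP => hj; apply: nh; exists j.
have [k [k3 lk kB]] := @task_exists_gen 1 j B isT.
by exists k; split => //; rewrite /lbl lk.
Qed.

Lemma val_split i k b : k %% 3 = 1 -> val i k b = if omega i (lbl k) then c' else c.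
Proof. by rewrite /val => ->. Qed.

Lemma xf_inj : injective xf.
Proof.
move=> i i' e; apply: contrapT => ne.
have [k [k3 kB bd]] := bits_differ (th i + th i' + (pickle g0).+1) ne.
have Fk0 : g0 \in Fk k.
  by rewrite /Fk k3 /= mem_Gseq; apply: leq_trans kB; rewrite leq_addl.
have w : Nt k <= Nt k < Mt k by rewrite leqnn Nt_Mt.
have h3 : (k %% 3 == 2) ==> (Nt k == Nt k) by rewrite eqxx implybT.
have t1 : th i <= k by apply: leq_trans kB; rewrite -addnA leq_addr.
have t2 : th i' <= k by apply: leq_trans kB; rewrite addnAC leq_addl.
have := @xf_task i k (Nt k) g0 t1 w h3 Fk0.
have := @xf_task i' k (Nt k) g0 t2 w h3 Fk0.
rewrite e => ->; rewrite !val_split //.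
move: bd; case: (omega i _); case: (omega i' _) => //= _ hh.
  by move: cc'; rewrite hh eqxx.
by move: cc'; rewrite hh eqxx.
Qed.

Lemma not_countable_range : ~ countable (range xf).
Proof.
move/countable_injP => [f fi].
pose h (beta : nat -> bool) := f (xf ((0, [::]), beta)).
have hi : injective h.
  move=> b1 b2 e.
  have m1 : xf ((0, [::]), b1) \in range xf by apply/mem_set; exists ((0, [::]), b1).
  have m2 : xf ((0, [::]), b2) \in range xf by apply/mem_set; exists ((0, [::]), b2).
  by have := fi _ _ m1 m2 e => /xf_inj [].
pose b0 n := `[< exists b, h b = n /\ b n = false >].
case E: (b0 (h b0)).
- have E' := E; move/asboolP: E => [b [hb bf]]; move/hi: hb => hb.
  by rewrite hb in bf; rewrite bf in E'.
- have : b0 (h b0) by apply/asboolP; exists b0.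
  by rewrite E.
Qed.


Variables (R : realType) (d : (G -> X) -> (G -> X) -> R).
Hypothesis hd : compatible_metric d.
Local Open Scope ring_scope.

Definition cstf (v : X) : G -> X := fun _ => v.

Lemma ball_cyl x0 (r : R) : 0 < r ->
  exists m, forall y, (forall a, a \in Gseq G m -> y a = x0 a) -> d x0 y < r.
Proof.
case: hd => dpos d0 dsym dtri dopen r0.
have mo : metric_open d [set y | d x0 y < r].
  move=> y /= hy; exists (r - d x0 y); first by rewrite subr_gt0.
  move=> z hz /=; have := dtri x0 y z; lra.
have x0r : [set y | d x0 y < r] x0 by rewrite /= (proj2 (d0 x0 x0)).
have [F hF] := (proj2 (dopen _)) mo x0 x0r.
have [m hm] := cyl_Gseq F.
exists m => y hy; apply: hF => a aF; exact: hy a (hm a aF).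
Qed.

Lemma ball_cyl_k x0 (r : R) m k z :
  (forall y, (forall a, a \in Gseq G m -> y a = x0 a) -> d x0 y < r) ->
  (m <= k)%N -> (forall a, a \in Gseq G k -> z a = x0 a) -> d x0 z < r.
Proof.
move=> h mk hz; apply: h => a; rewrite mem_Gseq => am; apply: hz.
by rewrite mem_Gseq (leq_trans am mk).
Qed.

Lemma orbit_window i k t a : (th i <= k)%N -> (k %% 3 != 2)%N -> (Nt k <= t < Mt k)%N ->
  a \in Gseq G k -> iter t (@sigma_phi X G phi) (xf i) a = val i k a.
Proof.
move=> tk k2 w aG; rewrite iter_sigma (@xf_task i k t a) //.
- by rewrite (negbTE k2).
- by rewrite /Fk (negbTE k2).
Qed.

Let delta := d (cstf c) (cstf c').

Lemma delta_gt0 : 0 < delta.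
Proof.
case: hd => dpos d0 dsym dtri dopen.
rewrite lt0r dpos andbT; apply/eqP => /(proj1 (d0 _ _)) /(congr1 (fun f => f g0)) e.
by move: cc'; rewrite /cstf in e; rewrite e eqxx.
Qed.

Lemma far p q z1 z2 : d p z1 < delta / 3 -> d q z2 < delta / 3 -> d p q = delta ->
  ~ (d z1 z2 < delta / 3).
Proof.
case: hd => dpos d0 dsym dtri dopen h1 h2 hpq h.
have := dtri p z1 q; have := dtri z1 z2 q; have := dsym z2 q; lra.
Qed.

Lemma dc_pair i i' : i <> i' ->
  (forall s, 0 < s -> Fup d (@sigma_phi X G phi) (xf i) (xf i') s = 1%E) /\
  Flow d (@sigma_phi X G phi) (xf i) (xf i') (delta / 3) = 0%E.
Proof.
move=> ne.
have dd := hd; case: dd => dpos d0 dsym dtri dopen.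
split.
- move=> s s0; rewrite /Fup; apply: esup_one; first by move=> n; exact: xi_le.
  move=> e e0 B.
  have [K0 hK] := big_k e0.
  have [ms hms] := @ball_cyl (cstf c) (s / 2) ltac:(by rewrite divr_gt0).
  pose k := (3 * (B + K0 + ms + th i + th i'))%N.
  have k3 : (k %% 3 = 0)%N by rewrite /k modnMr.
  have kge : (B + K0 + ms + th i + th i' <= k)%N by rewrite /k leq_pmull.
  exists (Mt k); split.
    apply: leq_trans (ltnW (Mt_k k)); lia.
  apply: (@ratio_lb _ _ (Nt k) _ k.+1).
  + done.
  + by rewrite /Mt.
  + apply: hK; lia.
  + apply: xi_lb; first exact: ltnW (Nt_Mt k).
    move=> t w.
    have k2 : (k %% 3 != 2)%N by rewrite k3.
    have hx : forall a, a \in Gseq G k -> iter t (@sigma_phi X G phi) (xf i) a = cstf c a.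
      move=> a aG; rewrite (@orbit_window _ k) //; first by rewrite /val k3.
      lia.
    have hy : forall a, a \in Gseq G k -> iter t (@sigma_phi X G phi) (xf i') a = cstf c a.
      move=> a aG; rewrite (@orbit_window _ k) //; first by rewrite /val k3.
      lia.
    have msk : (ms <= k)%N by lia.
    have h1 := ball_cyl_k hms msk hx.
    have h2 := ball_cyl_k hms msk hy.
    have := dtri (iter t (@sigma_phi X G phi) (xf i)) (cstf c) (iter t (@sigma_phi X G phi) (xf i')).
    have := dsym (iter t (@sigma_phi X G phi) (xf i)) (cstf c); lra.
  + exact: ltnW (Nt_Mt k).
- rewrite /Flow; apply: einf_zero => e e0 B.
  have [K0 hK] := big_k e0.
  have d3 : 0 < delta / 3 by rewrite divr_gt0 // delta_gt0.
  have [m1 hm1] := @ball_cyl (cstf c) (delta / 3) d3.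
  have [m2 hm2] := @ball_cyl (cstf c') (delta / 3) d3.
  have [k [k3 kge bd]] := bits_differ (B + K0 + m1 + m2 + th i + th i') ne.
  exists (Mt k); split.
    apply: leq_trans (ltnW (Mt_k k)); lia.
  apply: (@ratio_ub _ _ (Nt k) _ k.+1).
  + done.
  + by rewrite /Mt.
  + apply: hK; lia.
  apply: xi_ub; first exact: ltnW (Nt_Mt k).
  move=> t w; apply/negP.
  have k2 : (k %% 3 != 2)%N by rewrite k3.
  have ti : (th i <= k)%N by lia.
  have ti' : (th i' <= k)%N by lia.
  have m1k : (m1 <= k)%N by lia.
  have m2k : (m2 <= k)%N by lia.
  have hx : forall a, a \in Gseq G k -> iter t (@sigma_phi X G phi) (xf i) a =
      cstf (if omega i (lbl k) then c' else c) a.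
    by move=> a aG; rewrite (@orbit_window _ k) // val_split.
  have hy : forall a, a \in Gseq G k -> iter t (@sigma_phi X G phi) (xf i') a =
      cstf (if omega i' (lbl k) then c' else c) a.
    by move=> a aG; rewrite (@orbit_window _ k) // val_split.
  move: hx hy bd; case: (omega i _); case: (omega i' _) => //= hx hy _.
  + apply: far (ball_cyl_k hm2 m2k hx) (ball_cyl_k hm1 m1k hy) _.
    exact: dsym.
  + exact: far (ball_cyl_k hm1 m1k hx) (ball_cyl_k hm2 m2k hy) erefl.
Qed.

End Construction.
Unset Implicit Arguments.
Set Strict Implicit.

Theorem theorem5p4 (R : realType) (X : finType) (G : countType)
  (d : (G -> X) -> (G -> X) -> R) (phi : G -> G) :
  (1 < #|X|)%N -> inhabited G -> compatible_metric d ->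
  (transitive_distributional_chaotic d (sigma_phi phi) <->
   (injective phi /\ forall (a : G) (n : nat), (0 < n)%N -> ssrnat.iter n phi a <> a)).
Proof.
move=> X1 [g0] hd.
have /card_gt1P [c [c' [_ _ cc']]] := X1.
split.
- move=> [A [eps [Ad Anc Atr e0 Adc]]].
  have [x Ax] : exists x, A x.
    apply: contrapT => h; apply: Anc.
    have -> : A = set0.
      by apply/seteqP; split => z // Az; exfalso; apply: h; exists z.
    exact: countable0.
  split.
  + move=> a b e; apply: contrapT => ab.
    exact: (not_inj_no_trans cc' e ab (Atr x Ax)).
  + move=> a n n0 per; exact: (periodic_no_trans cc' n0 per (Atr x Ax)).
- move=> [pinj noper].
  have [Lf LfP] := Lf_exists noper.
  exists (range (xf phi c c' Lf)), (d (cstf (G:=G) c) (cstf (G:=G) c') / 3).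
  split.
  + exact: xf_dense.
  + by have := not_countable_range pinj g0 cc' LfP.
  + by move=> _ [i _ <-]; exact: xf_trans.
  + by rewrite divr_gt0 // (delta_gt0 g0 cc' hd).
  + move=> _ _ [i _ <-] [i' _ <-] ne; apply: (dc_pair pinj g0 cc' LfP hd).
    by move=> ei; apply: ne; rewrite ei.
Qed.
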